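(* Pruned multiplication is an associative operation on $T^1(\Sigma)$. The unary operations $*$ and $+$ on $T^1(\Sigma)$ are idempotent, and the subsemigroup of $T^1(\Sigma)$ generated by their images is commutative.
   Context: Let $\Sigma$ be a set. A $\Sigma$-tree is a finite directed graph whose underlying undirected graph is a tree, edges labelled by elements of $\Sigma$, with distinguished start and end vertices such that there is a (possibly empty) directed path from start to end vertex. A morphism $X\to Y$ maps vertices to vertices and edges to edges, preserving initial vertex, terminal vertex and label of each edge, and mapping start/end vertex to start/end vertex; isomorphisms are morphisms bijective on vertices and edges. A retraction is an idempotent morphism $X\to X$, its image a retract; $X$ is pruned if it admits no non-identity retraction. Every tree $X$ has a pruned retract, unique up to isomorphism, whose isomorphism type is $\overline{X}$. $T^1(\Sigma)$ is the set of isomorphism types of pruned $\Sigma$-trees. Unpruned operations: $X\times Y$ identifies the end vertex of (a copy of) $X$ with the start vertex of (a disjoint copy of) $Y$, start vertex that of $X$, end vertex that of $Y$; $X^{(+)}$ is $X$ with end vertex moved to the start vertex; $X^{( * )}$ is $X$ with start vertex moved to the end vertex. Pruned operations on $T^1(\Sigma)$: $XY=\overline{X\times Y}$, $X^+=\overline{X^{(+)}}$, $X^*=\overline{X^{( * )}}$. *)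

(* Defs.v *)
From mathcomp Require Import all_boot.
Set Implicit Arguments. Unset Strict Implicit. Unset Printing Implicit Defensive.

Record sgraph (Sigma : Type) := SGraph {
  V : finType;
  E : finType;
  src : E -> V;
  tgt : E -> V;
  lab : E -> Sigma;
  st : V;
  en : V }.

Arguments V {Sigma} _.
Arguments E {Sigma} _.

Section Defs.
Variable Sigma : Type.
Implicit Types X Y P : sgraph Sigma.

Definition uadj X : rel (V X) := fun u v =>
  [exists e : E X, ((src e == u) && (tgt e == v)) || ((src e == v) && (tgt e == u))].
Definition dadj X : rel (V X) := fun u v =>
  [exists e : E X, (src e == u) && (tgt e == v)].

(* A Sigma-tree: the underlying undirected (multi)graph is a tree, i.e. it is
   connected with #E = #V - 1; and there is a directed path from start to end. *)
Definition is_tree X : Prop :=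
  (forall u v : V X, connect (@uadj X) u v) /\ #|E X|.+1 = #|V X| /\
  connect (@dadj X) (st X) (en X).

Definition is_morph X Y (fv : V X -> V Y) (fe : E X -> E Y) : Prop :=
  (forall e, src (fe e) = fv (src e)) /\ (forall e, tgt (fe e) = fv (tgt e)) /\
  (forall e, lab (fe e) = lab e) /\ fv (st X) = st Y /\ fv (en X) = en Y.

Definition iso X Y : Prop :=
  exists (fv : V X -> V Y) (fe : E X -> E Y),
    is_morph fv fe /\ bijective fv /\ bijective fe.

Definition is_retraction X (rv : V X -> V X) (re : E X -> E X) : Prop :=
  is_morph rv re /\ (forall v, rv (rv v) = rv v) /\ (forall e, re (re e) = re e).

Definition pruned X : Prop :=
  forall rv re, @is_retraction X rv re -> (forall v, rv v = v) /\ (forall e, re e = e).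

(* P is isomorphic to the retract (image) of the retraction (rv, re) of X:
   there is a morphism P -> X, injective on vertices and edges, whose image is
   exactly the image of the retraction. *)
Definition iso_to_image P X (rv : V X -> V X) (re : E X -> E X) : Prop :=
  exists (iv : V P -> V X) (ie : E P -> E X),
    is_morph iv ie /\ injective iv /\ injective ie /\
    (forall v, (exists w, iv w = v) <-> (exists u, rv u = v)) /\
    (forall e, (exists d, ie d = e) <-> (exists c, re c = e)).

Definition is_retract P X : Prop :=
  exists rv re, @is_retraction X rv re /\ iso_to_image P rv re.

(* pruned Sigma-trees: representatives of elements of T^1(Sigma) *)
Definition ptree X : Prop := is_tree X /\ pruned X.

(* P represents \overline{X}: P is a pruned tree isomorphic to a retract of X *)
Definition prunedof X P : Prop := ptree P /\ is_retract P X.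

Definition glueV X Y := (V X + {y : V Y | y != st Y})%type.

Definition inY X Y (y : V Y) : glueV X Y :=
  match insub y with Some y' => inr y' | None => inl (en X) end.

Definition gsrc X Y (e : E X + E Y) : glueV X Y :=
  match e with inl e => inl (src e) | inr e => inY X (src e) end.
Definition gtgt X Y (e : E X + E Y) : glueV X Y :=
  match e with inl e => inl (tgt e) | inr e => inY X (tgt e) end.
Definition glab X Y (e : E X + E Y) : Sigma :=
  match e with inl e => lab e | inr e => lab e end.

Definition tmul X Y : sgraph Sigma :=
  @SGraph Sigma (glueV X Y : finType) ((E X + E Y)%type : finType)
    (@gsrc X Y) (@gtgt X Y) (@glab X Y) (inl (st X)) (inY X (en Y)).

Definition tplus X : sgraph Sigma :=
  @SGraph Sigma (V X) (E X) (@src _ X) (@tgt _ X) (@lab _ X) (st X) (st X).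
Definition tstar X : sgraph Sigma :=
  @SGraph Sigma (V X) (E X) (@src _ X) (@tgt _ X) (@lab _ X) (en X) (en X).

(* the subsemigroup of T^1 generated by the images of + and star
   (as a predicate on representatives, closed under isomorphism) *)
Inductive gen_plus_star : sgraph Sigma -> Prop :=
| gen_p X P : ptree X -> prunedof (tplus X) P -> gen_plus_star P
| gen_s X P : ptree X -> prunedof (tstar X) P -> gen_plus_star P
| gen_m A B P : gen_plus_star A -> gen_plus_star B -> prunedof (tmul A B) P ->
    gen_plus_star P.

End Defs.

(* Main.v *)
Require Import Defs.
From mathcomp Require Import all_boot. From mathcomp Require Import zify.
Set Implicit Arguments. Unset Strict Implicit. Unset Printing Implicit Defensive.

Lemma iter_idem (T : finType) (h : T -> T) :
  exists m, 0 < m /\ forall x, iter m h (iter m h x) = iter m h x.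
Proof.
pose F := fun i : 'I_(#|{ffun T -> T}|.+1) => [ffun x => iter i.+1 h x].
have : ~~ injectiveb F.
  apply/negP => /injectiveP Hi.
  by have := leq_card _ Hi; rewrite card_ord ltnn.
case/injectivePn => i [j Hij HF].
have key : forall a b, a < b -> (forall x, iter a.+1 h x = iter b.+1 h x) ->
    exists m, 0 < m /\ forall x, iter m h (iter m h x) = iter m h x.
  move=> a b ab Hab; set p := b - a.
  have Hp : forall n x, a < n -> iter (n + p) h x = iter n h x.
    move=> n x an.
    have -> : n + p = (n - a.+1) + b.+1 by rewrite /p; lia.
    rewrite iterD -Hab -iterD; congr iter; lia.
  have Hk : forall k n x, a < n -> iter (k * p + n) h x = iter n h x.
    elim=> [|k IH] n x an; first by rewrite mul0n.
    rewrite mulSn -addnA addnC Hp; first exact: IH.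
    lia.
  exists (a.+1 * p); split; first by rewrite muln_gt0 /p; lia.
  move=> x; rewrite -iterD Hk //.
  rewrite /p; nia.
have HF' : forall x, iter i.+1 h x = iter j.+1 h x.
  by move=> x; have := congr1 (fun f : {ffun T -> T} => f x) HF; rewrite /F !ffunE.
case: (ltngtP i j) => ij.
- exact: key ij HF'.
- by apply: key ij _ => x; rewrite HF'.
- by move: Hij; rewrite (val_inj ij) eqxx.
Qed.
Section S.
Variable Sigma : Type.
Implicit Types X Y Z : sgraph Sigma.

Definition homo X Y := exists (fv : V X -> V Y) (fe : E X -> E Y), is_morph fv fe.

Lemma morph_comp X Y Z (fv : V X -> V Y) fe (gv : V Y -> V Z) ge :
  is_morph fv fe -> is_morph gv ge -> is_morph (gv \o fv) (ge \o fe).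
Proof.
move=> [f1 [f2 [f3 [f4 f5]]]] [g1 [g2 [g3 [g4 g5]]]].
split; [|split; [|split; [|split]]] => /=.
- by move=> e; rewrite g1 f1.
- by move=> e; rewrite g2 f2.
- by move=> e; rewrite g3 f3.
- by rewrite f4 g4.
- by rewrite f5 g5.
Qed.

Lemma homo_trans X Y Z : homo X Y -> homo Y Z -> homo X Z.
Proof.
move=> [fv [fe Hf]] [gv [ge Hg]]; exists (gv \o fv), (ge \o fe).
exact: morph_comp.
Qed.


Lemma morph_iter X (hv : V X -> V X) he n :
  is_morph hv he -> is_morph (iter n hv) (iter n he).
Proof.
move=> [f1 [f2 [f3 [f4 f5]]]]; elim: n => [|n [i1 [i2 [i3 [i4 i5]]]]] /=.
  by split; [|split; [|split; [|split]]].
split; [|split; [|split; [|split]]].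
- by move=> e; rewrite !iterS f1 i1.
- by move=> e; rewrite !iterS f2 i2.
- by move=> e; rewrite !iterS f3 i3.
- by rewrite iterS i4 f4.
- by rewrite iterS i5 f5.
Qed.

Lemma pruned_inj X (hv : V X -> V X) he :
  pruned X -> is_morph hv he -> injective hv /\ injective he.
Proof.
move=> Hp Hm.
pose H := fun s : (V X + E X)%type =>
  match s with inl v => inl (hv v) | inr e => inr (he e) end.
have [m [m0 Hi]] := iter_idem H.
have Hl : forall n v, iter n H (inl v) = inl (iter n hv v).
  by elim=> [|n IH] v //=; rewrite IH.
have Hr : forall n e, iter n H (inr e) = inr (iter n he e).
  by elim=> [|n IH] e //=; rewrite IH.
have [Rv Re] : (forall v, iter m hv v = v) /\ (forall e, iter m he e = e).
  apply: Hp; split; first exact: morph_iter.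
  split.
  - by move=> v; have := Hi (inl v); rewrite !Hl => -[].
  - by move=> e; have := Hi (inr e); rewrite !Hr => -[].
case: m m0 Rv Re {Hi} => // m _ Rv Re.
split.
- by move=> x y Hxy; rewrite -(Rv x) -(Rv y) !iterSr Hxy.
- by move=> x y Hxy; rewrite -(Re x) -(Re y) !iterSr Hxy.
Qed.

Lemma homo_iso X Y : pruned X -> pruned Y -> homo X Y -> homo Y X -> iso X Y.
Proof.
move=> pX pY [fv [fe Hf]] [gv [ge Hg]].
have [i1 i2] := pruned_inj pX (morph_comp Hf Hg).
have [j1 j2] := pruned_inj pY (morph_comp Hg Hf).
have fvi : injective fv by move=> x y H; apply: i1; rewrite /= H.
have fei : injective fe by move=> x y H; apply: i2; rewrite /= H.
have gvi : injective gv by move=> x y H; apply: j1; rewrite /= H.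
have gei : injective ge by move=> x y H; apply: j2; rewrite /= H.
exists fv, fe; split => //; split.
- by apply: inj_card_bij fvi _; exact: (leq_card gv gvi).
- by apply: inj_card_bij fei _; exact: (leq_card ge gei).
Qed.

End S.
Section S3.
Variable Sigma : Type.
Implicit Types X Y Z P A B : sgraph Sigma.

Lemma retract_homo X P : is_retract P X -> homo P X /\ homo X P.
Proof.
move=> [rv [re [[Hm [Iv Ie]] [iv [ie [Hi [ivi [iei [Imv Ime]]]]]]]]].
split; first by exists iv, ie.
have exv : forall x, exists w, iv w == rv x.
  by move=> x; have [w Hw] := (proj2 (Imv (rv x))) (ex_intro _ x erefl); exists w; apply/eqP.
have exe : forall x, exists w, ie w == re x.
  by move=> x; have [w Hw] := (proj2 (Ime (re x))) (ex_intro _ x erefl); exists w; apply/eqP.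
pose pv x := xchoose (exv x).
pose pe x := xchoose (exe x).
have Pv : forall x, iv (pv x) = rv x by move=> x; apply/eqP; exact: (xchooseP (exv x)).
have Pe : forall x, ie (pe x) = re x by move=> x; apply/eqP; exact: (xchooseP (exe x)).
move: Hm Hi => [m1 [m2 [m3 [m4 m5]]]] [h1 [h2 [h3 [h4 h5]]]].
exists pv, pe; split; [|split; [|split; [|split]]].
- by move=> e; apply: ivi; rewrite Pv -h1 Pe m1.
- by move=> e; apply: ivi; rewrite Pv -h2 Pe m2.
- by move=> e; rewrite -h3 Pe m3.
- by apply: ivi; rewrite Pv m4 h4.
- by apply: ivi; rewrite Pv m5 h5.
Qed.

Lemma prunedof_homo X P : prunedof X P -> homo P X /\ homo X P.
Proof. by move=> [_ H]; exact: retract_homo. Qed.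

Lemma prunedof_st X P : prunedof X P -> st X = en X -> st P = en P.
Proof.
move=> [_ [rv [re [_ [iv [ie [[_ [_ [_ [h4 h5]]]] [ivi _]]]]]]]] E.
by apply: ivi; rewrite h4 h5.
Qed.

Lemma prunedof_pruned X P : prunedof X P -> pruned P.
Proof. by move=> [[_ H] _]. Qed.

Lemma inY_st X Y : inY X (st Y) = inl (en X).
Proof. by rewrite /inY insubF // eqxx. Qed.

Lemma inY_st' X Y (y : V Y) : y = st Y -> inY X y = inl (en X).
Proof. by move=> ->; exact: inY_st. Qed.

Lemma inY_val X Y (y : {y : V Y | y != st Y}) : inY X (val y) = inr y.
Proof. by rewrite /inY valK. Qed.

Lemma inY_cases X Y (y : V Y) :
  (y = st Y /\ inY X y = inl (en X)) \/
  (exists y' : {y : V Y | y != st Y}, val y' = y /\ inY X y = inr y').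
Proof.
case: (eqVneq y (st Y)) => [->|ne]; first by left; rewrite inY_st.
by right; exists (exist _ y ne); rewrite -inY_val.
Qed.

Lemma tmul_homo A (A' : sgraph Sigma) B (B' : sgraph Sigma) : homo A A' -> homo B B' -> homo (tmul A B) (tmul A' B').
Proof.
move=> [fv [fe [f1 [f2 [f3 [f4 f5]]]]]] [gv [ge [g1 [g2 [g3 [g4 g5]]]]]].
pose hv := fun s : glueV A B => match s with
  | inl x => inl (fv x) : glueV A' B'
  | inr y => inY A' (gv (val y)) end.
have hY : forall y, hv (inY A y) = inY A' (gv y).
  move=> y; case: (inY_cases A y) => [[-> ->]|[y' [<- ->]]] //=.
  by rewrite g4 inY_st f5.
pose he := fun s : (E A + E B)%type => match s with
  | inl e => inl (fe e) : (E A' + E B')%type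
  | inr e => inr (ge e) end.
exists hv, he; split; [|split; [|split; [|split]]].
- by case=> e /=; [rewrite f1 | rewrite hY g1].
- by case=> e /=; [rewrite f2 | rewrite hY g2].
- by case=> e /=; [rewrite f3 | rewrite g3].
- by rewrite /= f4.
- by rewrite /= hY g5.
Qed.


Lemma assoc1 X Y Z : homo (tmul (tmul X Y) Z) (tmul X (tmul Y Z)).
Proof.
pose hv := fun s : glueV (tmul X Y) Z => match s with
  | inl w => match w with
             | inl x => inl x
             | inr y => inY X (inl (val y) : V (tmul Y Z)) end
  | inr z => inY X (inY Y (val z) : V (tmul Y Z)) end : glueV X (tmul Y Z).
have h1 : forall y, hv (inl (inY X y)) = inY X (inl y : V (tmul Y Z)).
  move=> y; case: (inY_cases X y) => [[-> ->]|[y' [<- ->]]] //=.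
  by rewrite [in RHS](_ : inl (st Y) = st (tmul Y Z)) // inY_st.
have h2 : forall z, hv (inY (tmul X Y) z) = inY X (inY Y z : V (tmul Y Z)).
  move=> z; case: (inY_cases (tmul X Y) z) => [[-> ->]|[z' [<- ->]]] //=.
  rewrite inY_st; exact: (h1 (en Y)).
have h0 : forall x, hv (inl (inl x)) = inl x by [].
clearbody hv.
pose he := fun s : (E (tmul X Y) + E Z)%type => match s with
  | inl (inl e) => inl e
  | inl (inr e) => inr (inl e)
  | inr e => inr (inr e) end : (E X + E (tmul Y Z))%type.
exists hv, he; split; [|split; [|split; [|split]]].
- by case=> [[e|e]|e] //=; rewrite ?h0 ?h1 ?h2.
- by case=> [[e|e]|e] //=; rewrite ?h0 ?h1 ?h2.
- by case=> [[e|e]|e].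
- by rewrite /= h0.
- by rewrite /= h2.
Qed.

Lemma assoc2 X Y Z : homo (tmul X (tmul Y Z)) (tmul (tmul X Y) Z).
Proof.
pose rho := fun w : glueV Y Z => match w with
  | inl y => inl (inY X y)
  | inr z => inr z end : glueV (tmul X Y) Z.
pose hv := fun s : glueV X (tmul Y Z) => match s with
  | inl x => inl (inl x)
  | inr w => rho (val w) end : glueV (tmul X Y) Z.
have h1 : forall w, hv (inY X w) = rho w.
  move=> w; case: (inY_cases X w) => [[-> ->]|[w' [<- ->]]] //=.
  by rewrite inY_st.
have h2 : forall z, rho (inY Y z) = inY (tmul X Y) z.
  move=> z; case: (inY_cases Y z) => [[-> ->]|[z' [<- ->]]] /=.
    by rewrite inY_st.
  by rewrite inY_val.
have h0 : forall x, hv (inl x) = inl (inl x) by [].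
have h3 : forall y, rho (inl y) = inl (inY X y) by [].
clearbody hv; clearbody rho.
pose he := fun s : (E X + E (tmul Y Z))%type => match s with
  | inl e => inl (inl e)
  | inr (inl e) => inl (inr e)
  | inr (inr e) => inr e end : (E (tmul X Y) + E Z)%type.
exists hv, he; split; [|split; [|split; [|split]]].
- by case=> [e|[e|e]] //=; rewrite ?h0 ?h1 ?h2 ?h3.
- by case=> [e|[e|e]] //=; rewrite ?h0 ?h1 ?h2 ?h3.
- by case=> [e|[e|e]].
- by rewrite /= h0.
- by rewrite /= h1 h2.
Qed.

Lemma tplus_homo A B : homo A B -> homo (tplus A) (tplus B).
Proof.
move=> [fv [fe [f1 [f2 [f3 [f4 f5]]]]]].
by exists fv, fe; split; [|split; [|split; [|split]]].
Qed.

Lemma tstar_homo A B : homo A B -> homo (tstar A) (tstar B).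
Proof.
move=> [fv [fe [f1 [f2 [f3 [f4 f5]]]]]].
by exists fv, fe; split; [|split; [|split; [|split]]].
Qed.

Lemma tplus_homo' A B : homo A (tplus B) -> homo (tplus A) (tplus B).
Proof.
move=> [fv [fe [f1 [f2 [f3 [f4 f5]]]]]].
by exists fv, fe; split; [|split; [|split; [|split]]].
Qed.

Lemma tplus_homo'' A B : homo (tplus B) A -> st A = en A -> homo (tplus B) (tplus A).
Proof.
move=> [fv [fe [f1 [f2 [f3 [f4 f5]]]]]] E.
by exists fv, fe; split; [|split; [|split; [|split]]].
Qed.

Lemma tstar_homo' A B : homo A (tstar B) -> homo (tstar A) (tstar B).
Proof.
move=> [fv [fe [f1 [f2 [f3 [f4 f5]]]]]].
by exists fv, fe; split; [|split; [|split; [|split]]].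
Qed.

Lemma tstar_homo'' A B : homo (tstar B) A -> st A = en A -> homo (tstar B) (tstar A).
Proof.
move=> [fv [fe [f1 [f2 [f3 [f4 f5]]]]]] E.
by exists fv, fe; split; [|split; [|split; [|split]]] => //=; rewrite -E.
Qed.

Lemma comm_homo A B : st A = en A -> st B = en B -> homo (tmul A B) (tmul B A).
Proof.
move=> EA EB.
pose hv := fun s : glueV A B => match s with
  | inl a => inY B a
  | inr b => inl (val b) end : glueV B A.
have h1 : forall b, hv (inY A b) = inl b.
  move=> b; case: (inY_cases A b) => [[-> ->]|[b' [<- ->]]] //=.
  by rewrite (inY_st' B (esym EA)) EB.
have h0 : forall a, hv (inl a) = inY B a by [].
clearbody hv.
pose he := fun s : (E A + E B)%type => match s with
  | inl e => inr e
  | inr e => inl e end : (E B + E A)%type.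
exists hv, he; split; [|split; [|split; [|split]]].
- by case=> e //=; rewrite ?h0 ?h1.
- by case=> e //=; rewrite ?h0 ?h1.
- by case=> e.
- by rewrite /= h0 inY_st EB.
- by rewrite /= h1 (inY_st' B (esym EA)).
Qed.

Lemma gen_st P : gen_plus_star P -> st P = en P.
Proof.
elim=> [X Q _ H|X Q _ H|A B Q _ HA _ HB H]; apply: (prunedof_st H) => //=.
by rewrite -HB inY_st HA.
Qed.

End S3.

Lemma homo_refl (Sigma : Type) (X : sgraph Sigma) : homo X X.
Proof. by exists id, id; split; [|split; [|split; [|split]]]. Qed.

Theorem corollary4p6 (Sigma : Type) :
  (* pruned multiplication is associative on T^1(Sigma): (XY)Z = X(YZ) *)
  (forall X Y Z XY XYZ YZ XYZ' : sgraph Sigma,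
     ptree X -> ptree Y -> ptree Z ->
     prunedof (tmul X Y) XY -> prunedof (tmul XY Z) XYZ ->
     prunedof (tmul Y Z) YZ -> prunedof (tmul X YZ) XYZ' ->
     iso XYZ XYZ') /\
  (* + is idempotent: (X^+)^+ = X^+ *)
  (forall X A B : sgraph Sigma,
     ptree X -> prunedof (tplus X) A -> prunedof (tplus A) B -> iso B A) /\
  (* star is idempotent: (X^* )^* = X^* *)
  (forall X A B : sgraph Sigma,
     ptree X -> prunedof (tstar X) A -> prunedof (tstar A) B -> iso B A) /\
  (* the subsemigroup generated by the images of + and star is commutative *)
  (forall A B AB BA : sgraph Sigma,
     gen_plus_star A -> gen_plus_star B ->
     prunedof (tmul A B) AB -> prunedof (tmul B A) BA -> iso AB BA).
Proof.
split; [|split; [|split]].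
- move=> X Y Z XY XYZ YZ XYZ' _ _ _ H1 H2 H3 H4.
  have [a1 a2] := prunedof_homo H1.
  have [b1 b2] := prunedof_homo H2.
  have [c1 c2] := prunedof_homo H3.
  have [d1 d2] := prunedof_homo H4.
  apply: homo_iso (prunedof_pruned H2) (prunedof_pruned H4) _ _.
  + apply: homo_trans b1 _; apply: homo_trans (tmul_homo a1 (homo_refl Z)) _.
    apply: homo_trans (assoc1 X Y Z) _; apply: homo_trans d2.
    exact: tmul_homo (homo_refl X) c2.
  + apply: homo_trans d1 _; apply: homo_trans (tmul_homo (homo_refl X) c1) _.
    apply: homo_trans (assoc2 X Y Z) _; apply: homo_trans b2.
    exact: tmul_homo a2 (homo_refl Z).
- move=> X A B _ H1 H2.
  have [a1 a2] := prunedof_homo H1.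
  have [b1 b2] := prunedof_homo H2.
  have EA : st A = en A by apply: (prunedof_st H1).
  apply: homo_iso (prunedof_pruned H2) (prunedof_pruned H1) _ _.
  + apply: homo_trans b1 _; apply: homo_trans a2.
    exact: (tplus_homo' a1).
  + apply: homo_trans a1 _; apply: homo_trans b2.
    exact: (tplus_homo'' (B := X) a2 EA).
- move=> X A B _ H1 H2.
  have [a1 a2] := prunedof_homo H1.
  have [b1 b2] := prunedof_homo H2.
  have EA : st A = en A by apply: (prunedof_st H1).
  apply: homo_iso (prunedof_pruned H2) (prunedof_pruned H1) _ _.
  + apply: homo_trans b1 _; apply: homo_trans a2.
    exact: (tstar_homo' a1).
  + apply: homo_trans a1 _; apply: homo_trans b2.
    exact: (tstar_homo'' (B := X) a2 EA).
- move=> A B AB BA gA gB H1 H2.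
  have [a1 a2] := prunedof_homo H1.
  have [b1 b2] := prunedof_homo H2.
  have EA := gen_st gA; have EB := gen_st gB.
  apply: homo_iso (prunedof_pruned H1) (prunedof_pruned H2) _ _.
  + apply: homo_trans a1 _; apply: homo_trans b2.
    exact: comm_homo.
  + apply: homo_trans b1 _; apply: homo_trans a2.
    exact: comm_homo.
Qed.
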